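(* Let $n\in\mathbb N\cup\{\omega\}$ and let $F\colon C\to D$ be a Conduché $n$-prefunctor between $n$-precategories. If $F(u)=1_v$ for some $k<n$, $u\in C_{k+1}$ and $v\in D_k$, then there exists a unique $u'\in C_k$ such that $F(u')=v$ and $u=1_{u'}$.
   Context: An $n$-precategory is an $n$-globular set $C$ (sets $C_k$, $k\le n$, with $s_i,t_i\colon C_{i+1}\to C_i$ satisfying $s_is_{i+1}=s_it_{i+1}$, $t_is_{i+1}=t_it_{i+1}$) with identities $u\mapsto1_u\colon C_k\to C_{k+1}$ and compositions $u\ast_iv\in C_{\max(k,l)}$ for $u\in C_k$, $v\in C_l$, $k,l\ge1$, $i=\min(k,l)-1$, $t_i(u)=s_i(v)$, satisfying the axioms of strict $n$-categories for sources/targets, units (e.g. $1_{s(w)}\ast_kw=w=w\ast_k1_{t(w)}$ for $w\in C_{k+1}$), associativity and distributivity of lower- over higher-dimensional composition, but not necessarily the interchange law; prefunctors preserve all this structure. An $n$-prefunctor $F\colon C\to D$ is Conduché if for all $k_1,k_2\ge1$ with $i=\min(k_1,k_2)-1$, $k=\max(k_1,k_2)$, every $u\in C_k$ and $i$-composable $v_1\in D_{k_1}$, $v_2\in D_{k_2}$ with $F(u)=v_1\ast_iv_2$, there exist unique $i$-composable $u_1\in C_{k_1}$, $u_2\in C_{k_2}$ with $F(u_1)=v_1$, $F(u_2)=v_2$ and $u_1\ast_iu_2=u$. *)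

(* Defs.v *)
From mathcomp Require Import all_boot.
Set Implicit Arguments. Unset Strict Implicit. Unset Printing Implicit Defensive.

Inductive nomega := Fin of nat | Omega.

Definition ltw (k : nat) (n : nomega) : Prop :=
  match n with Fin m => (k < m)%N | Omega => True end.
Definition lew (k : nat) (n : nomega) : Prop :=
  match n with Fin m => (k <= m)%N | Omega => True end.

(* Graded ("single-sorted") presentation of an n-globular set with
   identities and compositions: C_k = [x | dim x = k].
   src/tgt are s_{k-1}, t_{k-1} : C_k -> C_{k-1} (junk on 0-cells),
   idc x = 1_x : C_k -> C_{k+1} (junk on n-cells),
   comp i u v = u *_i v (junk unless u,v are i-composable). *)
Record gdata := GData {
  cell : Type;
  dim : cell -> nat;
  src : cell -> cell;
  tgt : cell -> cell;
  idc : cell -> cell;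
  comp : nat -> cell -> cell -> cell }.

Section GDefs.
Variable G : gdata.
Implicit Types x u v w : cell G.

Definition isrc (i : nat) x : cell G := iter (dim x - i) (@src G) x.
Definition itgt (i : nat) x : cell G := iter (dim x - i) (@tgt G) x.

Definition composable (i : nat) u v : Prop :=
  [/\ (1 <= dim u)%N, (1 <= dim v)%N, i = (minn (dim u) (dim v)).-1
    & itgt i u = isrc i v].
End GDefs.

Record is_precat (n : nomega) (G : gdata) : Prop := {
  pc_dim_le : forall x : cell G, lew (dim x) n;
  pc_dim_src : forall x : cell G, (1 <= dim x)%N -> dim (src x) = (dim x).-1;
  pc_dim_tgt : forall x : cell G, (1 <= dim x)%N -> dim (tgt x) = (dim x).-1;
  pc_glob_s : forall x : cell G, (2 <= dim x)%N -> src (src x) = src (tgt x);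
  pc_glob_t : forall x : cell G, (2 <= dim x)%N -> tgt (src x) = tgt (tgt x);
  pc_dim_id : forall x : cell G, ltw (dim x) n -> dim (idc x) = (dim x).+1;
  pc_src_id : forall x : cell G, ltw (dim x) n -> src (idc x) = x;
  pc_tgt_id : forall x : cell G, ltw (dim x) n -> tgt (idc x) = x;
  pc_dim_comp : forall i (u v : cell G), composable i u v ->
    dim (comp i u v) = maxn (dim u) (dim v);
  pc_isrc_comp : forall i (u v : cell G), composable i u v ->
    isrc i (comp i u v) = isrc i u;
  pc_itgt_comp : forall i (u v : cell G), composable i u v ->
    itgt i (comp i u v) = itgt i v;
  pc_src_comp_l : forall i (u v : cell G), composable i u v -> (dim u < dim v)%N ->
    src (comp i u v) = comp i u (src v);
  pc_tgt_comp_l : forall i (u v : cell G), composable i u v -> (dim u < dim v)%N ->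
    tgt (comp i u v) = comp i u (tgt v);
  pc_src_comp_r : forall i (u v : cell G), composable i u v -> (dim v < dim u)%N ->
    src (comp i u v) = comp i (src u) v;
  pc_tgt_comp_r : forall i (u v : cell G), composable i u v -> (dim v < dim u)%N ->
    tgt (comp i u v) = comp i (tgt u) v;
  pc_unit_l : forall i (w : cell G), (i < dim w)%N ->
    comp i (idc (isrc i w)) w = w;
  pc_unit_r : forall i (w : cell G), (i < dim w)%N ->
    comp i w (idc (itgt i w)) = w;
  pc_id_comp_l : forall i (u v : cell G), composable i u v -> (dim u < dim v)%N ->
    ltw (dim v) n -> idc (comp i u v) = comp i u (idc v);
  pc_id_comp_r : forall i (u v : cell G), composable i u v -> (dim v < dim u)%N ->
    ltw (dim u) n -> idc (comp i u v) = comp i (idc u) v;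
  pc_assoc : forall i (u v w : cell G),
    composable i u v -> composable i v w ->
    composable i (comp i u v) w -> composable i u (comp i v w) ->
    comp i (comp i u v) w = comp i u (comp i v w);
  pc_distr_l : forall i j (u v w : cell G), (i < j)%N ->
    composable j v w -> composable i u (comp j v w) ->
    composable i u v -> composable i u w ->
    composable j (comp i u v) (comp i u w) ->
    comp i u (comp j v w) = comp j (comp i u v) (comp i u w);
  pc_distr_r : forall i j (u v w : cell G), (i < j)%N ->
    composable j v w -> composable i (comp j v w) u ->
    composable i v u -> composable i w u ->
    composable j (comp i v u) (comp i w u) ->
    comp i (comp j v w) u = comp j (comp i v u) (comp i w u)
}.

Record precat (n : nomega) := Precat {
  pc_data :> gdata;
  pc_axioms : is_precat n pc_data }.

Record prefunctor (n : nomega) (C D : precat n) := Prefunctor {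
  fmap :> cell C -> cell D;
  pf_dim : forall x, dim (fmap x) = dim x;
  pf_src : forall x, (1 <= dim x)%N -> fmap (src x) = src (fmap x);
  pf_tgt : forall x, (1 <= dim x)%N -> fmap (tgt x) = tgt (fmap x);
  pf_id : forall x, ltw (dim x) n -> fmap (idc x) = idc (fmap x);
  pf_comp : forall i u v, composable i u v ->
    fmap (comp i u v) = comp i (fmap u) (fmap v) }.

Definition conduche (n : nomega) (C D : precat n) (F : prefunctor C D) : Prop :=
  forall i (u : cell C) (v1 v2 : cell D),
    composable i v1 v2 -> F u = comp i v1 v2 ->
    exists u1 u2 : cell C,
      [/\ composable i u1 u2, F u1 = v1, F u2 = v2 & comp i u1 u2 = u] /\
      forall w1 w2 : cell C,
        composable i w1 w2 -> F w1 = v1 -> F w2 = v2 -> comp i w1 w2 = u ->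
        w1 = u1 /\ w2 = u2.

(* Main.v *)
Require Import Defs.
From mathcomp Require Import all_boot.

Theorem proposition2p6 (n : nomega) (C D : precat n) (F : prefunctor C D) :
  conduche F ->
  forall (k : nat) (u : cell C) (v : cell D),
    ltw k n -> dim u = k.+1 -> dim v = k -> F u = idc v ->
    exists u' : cell C, (dim u' = k /\ F u' = v /\ u = idc u') /\
      forall u'' : cell C, dim u'' = k -> F u'' = v -> u = idc u'' -> u'' = u'.
Proof.
move=> HF k u v Hk Hu Hv HFu.
have AC := pc_axioms C; have AD := pc_axioms D.
have Hvn : ltw (dim v) n by rewrite Hv.
have Hdu1 : (1 <= dim u)%N by rewrite Hu.
have Hdsu : dim (src u) = k by rewrite (pc_dim_src AC Hdu1) Hu.
have Hdtu : dim (tgt u) = k by rewrite (pc_dim_tgt AC Hdu1) Hu.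
have Hsn : ltw (dim (src u)) n by rewrite Hdsu.
have Htn : ltw (dim (tgt u)) n by rewrite Hdtu.
have Hdiv : dim (idc v) = k.+1 by rewrite (pc_dim_id AD Hvn) Hv.
have Hdis : dim (idc (src u)) = k.+1 by rewrite (pc_dim_id AC Hsn) Hdsu.
have Hdit : dim (idc (tgt u)) = k.+1 by rewrite (pc_dim_id AC Htn) Hdtu.
have isrcE : forall (G : gdata) (x : cell G), dim x = k.+1 -> isrc k x = src x.
  by move=> G x Hx; rewrite /isrc Hx subSnn.
have itgtE : forall (G : gdata) (x : cell G), dim x = k.+1 -> itgt k x = tgt x.
  by move=> G x Hx; rewrite /itgt Hx subSnn.
have Hcv : composable k (idc v) (idc v).
  split; rewrite ?Hdiv //; first by rewrite minnn.
  by rewrite isrcE // itgtE // (pc_src_id AD Hvn) (pc_tgt_id AD Hvn).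
have Hvv : Defs.comp k (idc v) (idc v) = idc v.
  have := @pc_unit_l _ _ AD k (idc v); rewrite Hdiv isrcE // (pc_src_id AD Hvn).
  by apply; rewrite ltnSn.
have [u1 [u2 [_ Huniq]]] := HF k u (idc v) (idc v) Hcv (etrans HFu (esym Hvv)).
have FsE : F (src u) = v by rewrite (pf_src F Hdu1) HFu (pc_src_id AD Hvn).
have FtE : F (tgt u) = v by rewrite (pf_tgt F Hdu1) HFu (pc_tgt_id AD Hvn).
have Fis : F (idc (src u)) = idc v by rewrite (pf_id F Hsn) FsE.
have Fit : F (idc (tgt u)) = idc v by rewrite (pf_id F Htn) FtE.
have C1 : composable k u (idc (tgt u)).
  split; rewrite ?Hu ?Hdit //; first by rewrite minnn.
  by rewrite isrcE // itgtE // (pc_src_id AC Htn).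
have C2 : composable k (idc (src u)) u.
  split; rewrite ?Hu ?Hdis //; first by rewrite minnn.
  by rewrite isrcE // itgtE // (pc_tgt_id AC Hsn).
have E1 : Defs.comp k u (idc (tgt u)) = u.
  have := @pc_unit_r _ _ AC k u; rewrite Hu itgtE //; by apply; rewrite ltnSn.
have E2 : Defs.comp k (idc (src u)) u = u.
  have := @pc_unit_l _ _ AC k u; rewrite Hu isrcE //; by apply; rewrite ltnSn.
have Hid : u = idc (src u).
  by have [a _] := Huniq _ _ C1 HFu Fit E1; have [b _] := Huniq _ _ C2 Fis HFu E2; exact: etrans a (esym b).
exists (src u); split; first by [].
move=> u'' Hd _ ->.
have Hn : ltw (dim u'') n by rewrite Hd.
by rewrite (pc_src_id AC Hn).
Qed.
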